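(* Let $(\mathcal{X},\|\cdot\|)$ be a real Banach space, $P$ a probability distribution on a measurable space $\mathcal{E}$, and $Q,P_e:\mathcal{X}\to\mathcal{X}$ ($e\in\mathcal{E}$). Assume: (A1) $\|Q(\theta_1)-Q(\theta_2)\|\le\rho\|\theta_1-\theta_2\|$ for all $\theta_1,\theta_2$, with $\rho\in[0,1)$, and $\theta^\star$ is the unique fixed point of $Q$; (A2) $\|P_e(\theta_1)-P_e(\theta_2)\|\le L\|\theta_1-\theta_2\|$ for all $\theta_1,\theta_2$ and all $e$, with $L\ge0$; (A3) $W_e:=\|P_e(\theta^\star)-\theta^\star\|$ satisfies $\mathbb{E}_{e\sim P}[W_e]\le\sigma$ for some $\sigma\ge0$. Let $\theta_0\in\mathcal{X}$, let $e_0,e_1,\dots$ be i.i.d. with law $P$, and set $\theta_{t+1}=Q(P_{e_t}(\theta_t))$. Let $\gamma:=\rho L$ and $u_t:=\mathbb{E}[\|\theta_t-\theta^\star\|]$. Then: (i) if $\gamma<1$, $u_t\le\gamma^tu_0+\rho\sigma\frac{1-\gamma^t}{1-\gamma}$ for all $t$; (ii) $\mathbb{E}[\Omega(\theta_t;e_t)]\le2\gamma u_t+(1+\rho)\sigma$ for all $t$; (iii) if $\sigma=0$ and $\gamma<1$, then almost surely, for all $t$, $\|\theta_t-\theta^\star\|\le\gamma^t\|\theta_0-\theta^\star\|$ and $\Omega(\theta_t;e_t)\le2\gamma^{t+1}\|\theta_0-\theta^\star\|$.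
   Context: The order-gap is $\Omega(\theta;e):=\|Q(P_e(\theta))-P_e(Q(\theta))\|$. The events $e_t$ are independent of $\theta_0$ (which is deterministic), and $e_t$ is independent of $\theta_t$. *)

(* Defs.v *)
From HB Require Import structures.
From mathcomp Require Import all_boot all_order all_algebra.
From mathcomp Require Import all_classical all_reals all_analysis.
Set Implicit Arguments. Unset Strict Implicit. Unset Printing Implicit Defensive.
Import Order.TTheory GRing.Theory Num.Theory.
Import numFieldNormedType.Exports.
Local Open Scope classical_set_scope.
Local Open Scope ring_scope.

Definition order_gap (R : realType) (X : normedModType R) (E : Type)
  (Q : X -> X) (Pe : E -> X -> X) (theta : X) (e : E) : R :=
  `| Q (Pe e theta) - Pe e (Q theta) |.

Fixpoint iterate (R : realType) (X : normedModType R) (E Omega : Type)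
  (Q : X -> X) (Pe : E -> X -> X) (e : nat -> Omega -> E) (theta0 : X)
  (t : nat) (w : Omega) : X :=
  match t with
  | 0 => theta0
  | t'.+1 => Q (Pe (e t' w) (iterate Q Pe e theta0 t' w))
  end.

Definition mutually_independent d d' (Omega : measurableType d)
  (E : measurableType d') (R : realType) (P : probability Omega R)
  (e : nat -> Omega -> E) : Prop :=
  forall (I : seq nat) (A : nat -> set E), uniq I ->
    (forall i, i \in I -> measurable (A i)) ->
    P (\bigcap_(i in [set i | i \in I]) (e i @^-1` A i)) =
    (\prod_(i <- I) P (e i @^-1` A i))%E.

Definition has_law d d' (Omega : measurableType d)
  (E : measurableType d') (R : realType) (P : probability Omega R)
  (PE : probability E R) (f : Omega -> E) : Prop :=
  measurable_fun setT f /\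
  forall A : set E, measurable A -> P (f @^-1` A) = PE A.

(* Main.v *)
Require Import Defs.
From HB Require Import structures.
From mathcomp Require Import all_boot all_order all_algebra.
From mathcomp Require Import all_classical all_reals all_analysis.
From mathcomp Require Import measurable_realfun ring lra.
Import Order.TTheory GRing.Theory Num.Theory.
Import numFieldNormedType.Exports.
Local Open Scope classical_set_scope.
Local Open Scope ring_scope.

Lemma int_lin d (T : measurableType d) (R : realType) (mu : measure T R)
  (f g : T -> R) (a b : R) :
  0 <= a -> 0 <= b -> (forall x, 0 <= f x) -> (forall x, 0 <= g x) ->
  measurable_fun setT f -> measurable_fun setT g ->
  (\int[mu]_x (a * f x + b * g x)%:E
   = a%:E * \int[mu]_x (f x)%:E + b%:E * \int[mu]_x (g x)%:E)%E.
Proof.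
move=> a0 b0 f0 g0 mf mg.
under eq_integral do rewrite EFinD.
rewrite ge0_integralD //.
- rewrite (@ge0_integralZl_EFin _ _ _ mu setT measurableT (fun x => (f x)%:E)) //.
  + rewrite (@ge0_integralZl_EFin _ _ _ mu setT measurableT (fun x => (g x)%:E)) //.
    by move=> x _; rewrite lee_fin.
    by apply/measurable_EFinP.
  + by move=> x _; rewrite lee_fin.
  + by apply/measurable_EFinP.
- by move=> x _; rewrite lee_fin mulr_ge0.
- apply/measurable_EFinP; apply: measurable_funM => //.
- by move=> x _; rewrite lee_fin mulr_ge0.
- apply/measurable_EFinP; apply: measurable_funM => //.
Qed.

Lemma int_law d d' (Om : measurableType d) (E : measurableType d') (R : realType)
  (P : probability Om R) (PE : probability E R) (f : Om -> E) (h : E -> R) :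
  has_law P PE f -> measurable_fun setT h -> (forall x, 0 <= h x) ->
  (\int[P]_w (h (f w))%:E = \int[PE]_x (h x)%:E)%E.
Proof.
move=> [mf lawf] mh h0.
rewrite [RHS](eq_measure_integral (pushforward P f)); last first.
  move=> A mA _; exact: (esym (lawf A mA)).
rewrite ge0_integral_pushforward //.
- exact/measurable_EFinP.
- by move=> x _; rewrite lee_fin.
Qed.
Lemma mE d (T : measurableType d) (R : realType) (g : T -> R) :
  measurable_fun setT g -> measurable_fun setT (fun x => (g x)%:E).
Proof. by move=> mg; apply/measurable_EFinP. Qed.
Arguments int_law {d d' Om E R P PE f h}.
Arguments int_lin {d T R mu f g a b}.
Theorem theorem4p10 (R : realType) (X : completeNormedModType R)
  (dE : measure_display) (E : measurableType dE) (PE : probability E R)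
  (dO : measure_display) (Omega : measurableType dO) (P : probability Omega R)
  (Q : X -> X) (Pe : E -> X -> X) (rho L sigma : R) (thetas theta0 : X)
  (e : nat -> Omega -> E) :
  (* (A1) *)
  0 <= rho -> rho < 1 ->
  (forall x y : X, `|Q x - Q y| <= rho * `|x - y|) ->
  Q thetas = thetas -> (forall y : X, Q y = y -> y = thetas) ->
  (* (A2) *)
  0 <= L ->
  (forall (ev : E) (x y : X), `|Pe ev x - Pe ev y| <= L * `|x - y|) ->
  (* (A3) *)
  0 <= sigma ->
  measurable_fun setT (fun ev : E => `|Pe ev thetas - thetas|) ->
  (\int[PE]_ev (`|Pe ev thetas - thetas|)%:E <= sigma%:E)%E ->
  (* e_0, e_1, ... i.i.d. with law PE *)
  (forall t, has_law P PE (e t)) ->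
  mutually_independent P e ->
  (* measurability of the real-valued quantities whose expectations are taken *)
  (forall t, measurable_fun setT
     (fun w => `|iterate Q Pe e theta0 t w - thetas|)) ->
  (forall t, measurable_fun setT
     (fun w => order_gap Q Pe (iterate Q Pe e theta0 t w) (e t w))) ->
  let theta := iterate Q Pe e theta0 in
  let gamma := rho * L in
  let u := fun t => (\int[P]_w (`|theta t w - thetas|)%:E)%E in
  (* (i) *)
  (gamma < 1 -> forall t : nat,
     (u t <= (gamma ^+ t)%:E * u 0%N
             + (rho * sigma * ((1 - gamma ^+ t) / (1 - gamma)))%:E)%E) /\
  (* (ii) *)
  (forall t : nat,
     (\int[P]_w (order_gap Q Pe (theta t w) (e t w))%:E
        <= (2 * gamma)%:E * u t + ((1 + rho) * sigma)%:E)%E) /\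
  (* (iii) *)
  (sigma = 0 -> gamma < 1 ->
     {ae P, forall w, forall t : nat,
        `|theta t w - thetas| <= gamma ^+ t * `|theta0 - thetas| /\
        order_gap Q Pe (theta t w) (e t w)
          <= 2 * gamma ^+ t.+1 * `|theta0 - thetas| }).
Proof.
move=> rho0 rho1 QL Qs Qu L0 PL s0 mW Wint law indep mD mO theta gamma u.
pose W ev := `|Pe ev thetas - thetas|.
have W0 ev : 0 <= W ev by exact: normr_ge0.
have gam0 : 0 <= gamma by rewrite mulr_ge0.
have stepQ a : `|Q a - thetas| <= rho * `|a - thetas|.
  by rewrite -{1}Qs; apply: QL.
have stepP ev x : `|Pe ev x - thetas| <= L * `|x - thetas| + W ev.
  have := ler_normD (Pe ev x - Pe ev thetas) (Pe ev thetas - thetas).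
  rewrite addrA subrK => /le_trans; apply; rewrite lerD2r; exact: PL.
have step t w : `|theta t.+1 w - thetas| <= gamma * `|theta t w - thetas| + rho * W (e t w).
  rewrite /=; apply: le_trans (stepQ _) _; rewrite /gamma -mulrA -mulrDr.
  by apply: ler_wpM2l => //; apply: stepP.
have gap t w : order_gap Q Pe (theta t w) (e t w)
    <= 2 * gamma * `|theta t w - thetas| + (1 + rho) * W (e t w).
  rewrite /order_gap.
  set th := theta t w; set ev := e t w.
  have h1 := stepQ (Pe ev th).
  have h2 := stepP ev th.
  have h3 := stepP ev (Q th).
  have h4 := stepQ th.
  have h5 : L * `|Q th - thetas| <= L * (rho * `|th - thetas|) by apply: ler_wpM2l.
  have h6 : rho * `|Pe ev th - thetas| <= rho * (L * `|th - thetas| + W ev) by apply: ler_wpM2l.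
  have -> : Q (Pe ev th) - Pe ev (Q th) = (Q (Pe ev th) - thetas) - (Pe ev (Q th) - thetas).
    by rewrite opprB addrA subrK.
  apply: le_trans (ler_normB _ _) _.
  have -> : 2 * gamma * `|th - thetas| + (1 + rho) * W ev
     = rho * (L * `|th - thetas| + W ev) + (L * (rho * `|th - thetas|) + W ev).
    by rewrite /gamma; ring.
  apply: lerD; first exact: le_trans h1 h6.
  apply: le_trans h3 _; by rewrite lerD2r.
have mWe t : measurable_fun setT (fun w => W (e t w)).
  exact: (measurableT_comp mW (law t).1).
have EW t : (\int[P]_w (W (e t w))%:E <= sigma%:E)%E.
  by rewrite (int_law (law t) mW W0).
have u0 : u 0%N = (`|theta0 - thetas|)%:E.
  have := integral_cst P measurableT (`|theta0 - thetas|)%:E.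
  move=> h; rewrite /u /= h -[RHS]mule1; congr (_ * _)%E; exact: probability_setT.
have ustep t : (u t.+1 <= gamma%:E * u t + (rho * sigma)%:E)%E.
  apply: (@le_trans _ _ (\int[P]_w (gamma * `|theta t w - thetas| + rho * W (e t w))%:E)%E).
    apply: ge0_le_integral => //.
    - exact: mE.
    - apply: mE; apply: measurable_funD; apply: measurable_funM => //.
    - by move=> w _; rewrite lee_fin; apply: step.
  rewrite (int_lin gam0 rho0 (fun _ => normr_ge0 _) (fun _ => W0 _) (mD t) (mWe t)).
  apply: leeD => //; rewrite EFinM; apply: lee_wpmul2l; first by rewrite lee_fin.
  exact: EW.
split.
  move=> g1.
  have g1' : 0 < 1 - gamma by rewrite subr_gt0.
  have gne : 1 - gamma != 0 by apply/eqP => h; move: g1'; rewrite h ltxx.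
  set c := `|theta0 - thetas|.
  suff H t : (u t <= (gamma ^+ t * c + rho * sigma * ((1 - gamma ^+ t) / (1 - gamma)))%:E)%E.
    by move=> t; rewrite u0 -EFinM -EFinD; apply: H.
  elim: t => [|t IH].
    by rewrite u0 expr0 subrr mul0r mulr0 addr0 mul1r.
  apply: le_trans (ustep t) _.
  apply: le_trans (leeD (lee_wpmul2l _ IH) (lexx _)) _; first by rewrite lee_fin.
  rewrite -EFinM -EFinD lee_fin le_eqVlt; apply/orP; left; apply/eqP.
  rewrite exprS; field; exact: gne.
split.
  move=> t.
  apply: (@le_trans _ _ (\int[P]_w (2 * gamma * `|theta t w - thetas| + (1 + rho) * W (e t w))%:E)%E).
    apply: ge0_le_integral => //.
    - by move=> w _; rewrite lee_fin /order_gap.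
    - exact: mE.
    - apply: mE; apply: measurable_funD; apply: measurable_funM => //.
    - by move=> w _; rewrite lee_fin; apply: gap.
  have g2 : 0 <= 2 * gamma by rewrite mulr_ge0.
  have r1 : 0 <= 1 + rho by rewrite addr_ge0.
  rewrite (int_lin g2 r1 (fun _ => normr_ge0 _) (fun _ => W0 _) (mD t) (mWe t)).
  apply: leeD => //; rewrite EFinM; apply: lee_wpmul2l; first by rewrite lee_fin addr_ge0.
  exact: EW.
move=> sig0 g1.
have mWE : measurable_fun setT (fun x => (W x)%:E) by exact: mE.
pose S (n : nat) := [set: E] `&` [set x | ((n.+1%:R)^-1)%:E <= `|(W x)%:E|]%E.
have mS n : measurable (S n) by apply: emeasurable_fun_c_infty => //; exact: measurableT_comp.
have Wae n : PE (S n) = 0%E.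
  have hpos : (0 : R) < (n.+1%:R)^-1 by rewrite invr_gt0 ltr0Sn.
  have := le_integral_abse PE measurableT mWE hpos.
  have -> : (\int[PE]_x `|(W x)%:E| = \int[PE]_x (W x)%:E)%E.
    by apply: eq_integral => x _; rewrite abse_EFin ger0_norm.
  move=> /le_trans /(_ Wint); rewrite sig0 pmule_rle0 ?lte_fin // => h.
  by apply/eqP; rewrite eq_le h measure_ge0.
pose N t n := e t @^-1` S n.
have negN t n : P.-negligible (N t n).
  exists (N t n); split => //.
  - by have := (law t).1 measurableT _ (mS n); rewrite setTI.
  - by rewrite (law t).2.
have : P.-negligible (\bigcup_t \bigcup_n N t n).
  by apply: negligible_bigcup => t; apply: negligible_bigcup.
apply: negligibleS.
move=> w /= Hbad; apply: contrapT => Hn; apply: Hbad.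
have Wz t : W (e t w) = 0.
  apply/eqP; rewrite eq_le W0 andbT leNgt; apply/negP => Wpos.
  have [n hn] := ltr_add_invr Wpos.
  apply: Hn; exists t => //; exists n => //; rewrite /N /S /=; split => //.
  rewrite lee_fin ger0_norm //; rewrite add0r in hn; exact: ltW.
have Dt t : `|theta t w - thetas| <= gamma ^+ t * `|theta0 - thetas|.
  elim: t => [|t IH]; first by rewrite expr0 mul1r.
  apply: le_trans (step t w) _; rewrite Wz mulr0 addr0 exprS -mulrA.
  exact: ler_wpM2l.
move=> t; split; first exact: Dt.
apply: le_trans (gap t w) _; rewrite Wz mulr0 addr0 exprS.
apply: le_trans (ler_wpM2l _ (Dt t)) _; first by rewrite mulr_ge0.
by rewrite !mulrA.
Qed.
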